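(* Let $0<\alpha<\beta$ and $0<c<\alpha$ be real constants and define $f(a,b)=\dfrac{a^2+b^2-c^2}{2ab}$ for $a,b\in[\alpha,\beta]$. Then \[\max_{a,b\in[\alpha,\beta]} f(a,b)=\max\left\{\frac{\alpha^2+\beta^2-c^2}{2\alpha\beta},\ 1-\frac{c^2}{2\beta^2}\right\}.\] *)

(* Defs.v *)
From Stdlib Require Import Reals.
Open Scope R_scope.

Definition f62 (c a b : R) : R := (a ^ 2 + b ^ 2 - c ^ 2) / (2 * a * b).

Definition is_max_on_square (g : R -> R -> R) (alpha beta M : R) : Prop :=
  (exists a b, alpha <= a <= beta /\ alpha <= b <= beta /\ g a b = M) /\
  (forall a b, alpha <= a <= beta -> alpha <= b <= beta -> g a b <= M).

(* Main.v *)
Require Import Defs.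
From Stdlib Require Import Reals Lra Psatz.
Open Scope R_scope.

Lemma conv1 (p q al be a : R) : 0 < al -> al <= a -> a <= be -> 0 <= q ->
  p * a + q / a <= Rmax (p * al + q / al) (p * be + q / be).
Proof.
  intros H0 H1 H2 Hq.
  assert (Ha : 0 < a) by lra. assert (Hb : 0 < be) by lra.
  assert (K : q / a <= q / al + q / be - q * a / (al * be)).
  { assert (E : q / al + q / be - q * a / (al * be) - q / a
              = q * ((a - al) * (be - a)) / (a * al * be)) by (field; lra).
    assert (0 <= q * ((a - al) * (be - a)) / (a * al * be)).
    { apply Rmult_le_pos. apply Rmult_le_pos; [lra|apply Rmult_le_pos; lra].
      apply Rlt_le, Rinv_0_lt_compat; repeat apply Rmult_lt_0_compat; lra. }
    lra. }
  set (M := Rmax _ _).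
  assert (M1 : p * al + q / al <= M) by apply Rmax_l.
  assert (M2 : p * be + q / be <= M) by apply Rmax_r.
  destruct (Req_dec al be) as [E|E].
  { subst be. assert (a = al) by lra. subst a. lra. }
  set (t := (be - a) / (be - al)).
  assert (T0 : 0 <= t). { unfold t; apply Rmult_le_pos; [lra|apply Rlt_le, Rinv_0_lt_compat; lra]. }
  assert (T1 : t <= 1). { unfold t. apply (Rmult_le_reg_r (be - al)); [lra|].
    field_simplify; lra. }
  assert (L : p * a + (q / al + q / be - q * a / (al * be)) =
     t * (p * al + q / al) + (1 - t) * (p * be + q / be)) by (unfold t; field; lra).
  nra.
Qed.

Lemma frew (c a b : R) : 0 < a -> 0 < b ->
  f62 c a b = (1 / (2 * b)) * a + ((b ^ 2 - c ^ 2) / (2 * b)) / a.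
Proof. intros; unfold f62; field; lra. Qed.

Lemma frew2 (c a b : R) : 0 < a -> 0 < b -> f62 c a b = f62 c b a.
Proof. intros; unfold f62; field; lra. Qed.

Theorem lemma6p2 (alpha beta c : R) (Hab : 0 < alpha < beta) (Hc : 0 < c < alpha) :
  is_max_on_square (f62 c) alpha beta
    (Rmax ((alpha ^ 2 + beta ^ 2 - c ^ 2) / (2 * alpha * beta))
          (1 - c ^ 2 / (2 * beta ^ 2))).
Proof.
  assert (EA : f62 c alpha beta = (alpha ^ 2 + beta ^ 2 - c ^ 2) / (2 * alpha * beta)) by reflexivity.
  assert (EB : f62 c beta beta = 1 - c ^ 2 / (2 * beta ^ 2)) by (unfold f62; field; lra).
  assert (EC : f62 c alpha alpha = 1 - c ^ 2 / (2 * alpha ^ 2)) by (unfold f62; field; lra).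
  assert (CB : f62 c alpha alpha <= f62 c beta beta).
  { rewrite EB, EC. apply Rplus_le_compat_l, Ropp_le_contravar.
    unfold Rdiv. apply Rmult_le_compat_l. nra.
    apply Rinv_le_contravar; nra. }
  split.
  - unfold Rmax; destruct (Rle_dec _ _).
    + exists beta, beta; repeat split; lra.
    + exists alpha, beta; repeat split; lra.
  - intros a b Ha Hb.
    rewrite <- EA, <- EB.
    set (M := Rmax _ _).
    assert (M1 : f62 c alpha beta <= M) by apply Rmax_l.
    assert (M2 : f62 c beta beta <= M) by apply Rmax_r.
    assert (G : forall x y, 0 < x -> 0 < y -> f62 c x y <= M -> f62 c y x <= M).
    { intros x y Hx Hy H; rewrite frew2; lra. }
    assert (S : forall x y, alpha <= x <= beta -> alpha <= y <= beta ->
       f62 c x y <= Rmax (f62 c alpha y) (f62 c beta y)).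
    { intros x y Hx Hy. rewrite !frew by lra. apply conv1; try lra.
      apply Rmult_le_pos; [nra | apply Rlt_le, Rinv_0_lt_compat; lra]. }
    assert (P1 : f62 c alpha b <= M).
    { rewrite frew2 by lra. eapply Rle_trans. apply S; lra.
      apply Rmax_lub; [lra|]. rewrite frew2 by lra; lra. }
    assert (P2 : f62 c beta b <= M).
    { rewrite frew2 by lra. eapply Rle_trans. apply S; lra.
      apply Rmax_lub; lra. }
    eapply Rle_trans. apply S; lra. apply Rmax_lub; lra.
Qed.
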